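(* Let $n\ge0$. Among the elements of $R$ whose binary representation has length $2n+4$, exactly one has binary representation beginning with $1000$, namely $[1000(10)^n]_2$; moreover $[1000(10)^n]_2$ is the smallest element of $R$ whose binary representation has length $2n+4$.
   Context: Stern's sequence $(a(n))_{n\ge0}$: $a(0)=0$, $a(1)=1$, $a(2n)=a(n)$, $a(2n+1)=a(n)+a(n+1)$; $s(n)=a(n+1)$. $R$ is the set of record-setters of $s$, i.e. indices $v\ge0$ with $s(i)<s(v)$ for all $i<v$. Binary representations have no leading zeros. For a binary string $x$, $[x]_2$ is the integer it represents in base 2; $x^i$ denotes $i$-fold concatenation. *)

(* Defs.v *)
From mathcomp Require Import all_boot.
Set Implicit Arguments. Unset Strict Implicit. Unset Printing Implicit Defensive.

(* Stern's diatomic sequence a(0)=0, a(1)=1, a(2n)=a(n), a(2n+1)=a(n)+a(n+1),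
   computed with fuel (fuel n suffices for argument n). *)
Fixpoint stern_aux (fuel n : nat) : nat :=
  match fuel with
  | 0 => 0
  | f.+1 =>
    if n <= 1 then n
    else if odd n then stern_aux f n./2 + stern_aux f (n./2).+1
    else stern_aux f n./2
  end.

Definition stern_a (n : nat) : nat := stern_aux n.+1 n.

Definition stern_s (n : nat) : nat := stern_a n.+1.

Definition record_setter (v : nat) : Prop := forall i, i < v -> stern_s i < stern_s v.

(* binary representation (no leading zeros), most significant bit first;
   binrep 0 = [::] *)
Fixpoint binrep_aux (fuel n : nat) : seq bool :=
  match fuel with
  | 0 => [::]
  | f.+1 => if n == 0 then [::] else rcons (binrep_aux f n./2) (odd n)
  end.
Definition binrep (n : nat) : seq bool := binrep_aux n n.

Definition binval (x : seq bool) : nat := foldl (fun (acc : nat) (b : bool) => acc.*2 + nat_of_bool b) 0 x.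

Definition w1000 (n : nat) : seq bool :=
  [:: true; false; false; false] ++ flatten (nseq n [:: true; false]).

Section Sanity.
Example ex_a : [seq stern_a i | i <- iota 0 10] = [:: 0;1;1;2;1;3;2;3;1;4]. Proof. by []. Qed.
Example ex_b : binrep 6 = [:: true; true; false]. Proof. by []. Qed.
Example ex_c : binval (w1000 1) = 34. Proof. by []. Qed.
Example ex_d : binrep 34 = w1000 1. Proof. by []. Qed.
End Sanity.

(* Main.v *)
Require Import Defs.
From mathcomp Require Import all_boot zify.
Set Implicit Arguments. Unset Strict Implicit. Unset Printing Implicit Defensive.

Lemma stern_aux_fuel f g n : n < f -> n < g -> stern_aux f n = stern_aux g n.
Proof.
elim: f g n => [|f IH] [|g] n //= Hf Hg.
case: ifP => // Hn1; case: ifP => Ho.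
- rewrite (IH g n./2) ?(IH g n./2.+1) //; lia.
- rewrite (IH g n./2) //; lia.
Qed.

Lemma stern_auxS f n : stern_aux f.+1 n =
  if n <= 1 then n
  else if odd n then stern_aux f n./2 + stern_aux f (n./2).+1
  else stern_aux f n./2.
Proof. by []. Qed.

Lemma a_even m : stern_a (m.*2) = stern_a m.
Proof.
case: m => [|m] //. rewrite /stern_a stern_auxS.
have -> : (m.+1.*2 <= 1) = false by lia.
rewrite odd_double doubleK. apply: stern_aux_fuel; lia.
Qed.

Lemma a_odd m : stern_a (m.*2.+1) = stern_a m + stern_a m.+1.
Proof.
case: m => [|m] //. rewrite /stern_a stern_auxS.
have -> : (m.+1.*2.+1 <= 1) = false by lia.
have -> : odd (m.+1.*2.+1) = true by rewrite -addn1 oddD odd_double.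
have -> : (m.+1.*2.+1)./2 = m.+1 by rewrite -[_.+1]/(true + _) half_bit_double.
congr (_ + _); apply: stern_aux_fuel; lia.
Qed.

Definition step (st : nat * nat) (b : bool) : nat * nat :=
  if b then (st.1 + st.2, st.2) else (st.1, st.1 + st.2).

Lemma binval_rcons w b : binval (rcons w b) = (binval w).*2 + b.
Proof. by rewrite /binval foldl_rcons. Qed.

Lemma PV w : foldl step (0, 1) w = (stern_a (binval w), stern_a (binval w).+1).
Proof.
elim/last_ind: w => [|w b IH] //.
rewrite foldl_rcons IH binval_rcons; case: b => /=.
- by rewrite addn1 a_odd -doubleS a_even.
- by rewrite addn0 a_odd a_even.
Qed.

Lemma binrep_aux_fuel f g n : n <= f -> n <= g -> binrep_aux f n = binrep_aux g n.
Proof.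
elim: f g n => [|f IH] [|g] n //= Hf Hg.
- by have -> : n = 0 by lia.
- by have -> : n = 0 by lia.
case: eqP => // Hn; rewrite (IH g) //; lia.
Qed.

Lemma binrepS n : 0 < n -> binrep n = rcons (binrep n./2) (odd n).
Proof.
case: n => [|n] // _. rewrite /binrep /=. congr rcons. apply: binrep_aux_fuel; lia.
Qed.

Lemma binrep0 : binrep 0 = [::]. Proof. by []. Qed.

Lemma binvalK n : binval (binrep n) = n.
Proof.
elim: n {-2}n (leqnn n) => [|N IH] n Hn.
  by have -> : n = 0 by lia.
case: n Hn => [|n] Hn //.
rewrite binrepS // binval_rcons IH; last lia.
by rewrite -[in RHS](odd_double_half n.+1) addnC.
Qed.

Lemma binrep_size n : n < 2 ^ size (binrep n) /\ (0 < n -> 2 ^ size (binrep n) <= n.*2).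
Proof.
elim: n {-2}n (leqnn n) => [|N IH] n Hn.
  by have -> : n = 0 by lia.
case: n Hn => [|n] Hn //.
rewrite binrepS // size_rcons expnS.
have [H1 H2] := IH (n.+1)./2 ltac:(lia).
case: (posnP (n.+1)./2) => Hz.
- rewrite Hz /= in H1 H2 *. have -> : n = 0 by lia. by [].
- have := H2 Hz. split; lia.
Qed.

Fixpoint fib n := match n with 0 => 0 | 1 => 1 | S (S m as m1) => fib m + fib m1 end.
Lemma fibSS n : fib n.+2 = fib n + fib n.+1. Proof. by []. Qed.

Lemma fib_add a b : fib (a + b).+1 = fib a.+1 * fib b.+1 + fib a * fib b.
Proof.
elim: a b => [|a IH] b; first by rewrite add0n (_ : fib 1 = 1) // (_ : fib 0 = 0) //; lia.
rewrite addSnnS IH !fibSS; lia.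
Qed.

Lemma fib_le1 n : fib n <= fib n.+1.
Proof. case: n => [|n] //; rewrite fibSS; lia. Qed.

Lemma fib_mono m n : m <= n -> fib m <= fib n.
Proof.
move=> H; elim: n H => [|n IH] H; first by have -> : m = 0 by lia.
case: (ltnP m n.+1) => H'; last by have -> : m = n.+1 by lia.
apply: leq_trans (IH _) (fib_le1 _); lia.
Qed.

Lemma fib_odd_pos k : 0 < fib k.*2.+1.
Proof. elim: k => [|k IH] //. by rewrite doubleS fibSS addn_gt0 IH. Qed.

Lemma fib_even_lt k : fib k.*2 < fib k.*2.+1.
Proof.
case: k => [|k] //. rewrite doubleS (fibSS k.*2.+1). move: (fib_odd_pos k). generalize (fib k.*2.+1) (fib k.*2.+2); intros; lia.
Qed.

Lemma fib_32 k : 3 * fib k.*2 <= 2 * fib k.*2.+1.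
Proof.
case: k => [|k] //. rewrite doubleS (fibSS k.*2.+1) (fibSS k.*2). move: (fib_le1 k.*2). generalize (fib k.*2) (fib k.*2.+1); intros; lia.
Qed.

Lemma fib4 n : fib (n + 4) = 2 * fib n + 3 * fib n.+1.
Proof. rewrite !addnS addn0 !fibSS; lia. Qed.
Lemma fib5 n : fib (n + 5) = 3 * fib n + 5 * fib n.+1.
Proof. rewrite !addnS addn0 !fibSS; lia. Qed.

Definition X k := fib k.*2.+1 + 3 * fib k.*2.
Definition Y k := fib k.*2 + 4 * fib k.*2.+1.

Lemma XS k : X k.+1 = X k + Y k.
Proof. rewrite /X /Y doubleS !fibSS; lia. Qed.
Lemma YS k : Y k.+1 = X k + Y k + Y k.
Proof. rewrite /X /Y doubleS !fibSS; lia. Qed.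

Lemma FY k : fib (k.*2 + 4) < Y k.
Proof. rewrite fib4 /Y. have := fib_even_lt k. lia. Qed.

Lemma caseA k j : fib (j.*2.+2) * (X k + Y k) + fib j.*2.+1 * X k <= fib ((k + j).+1.*2 + 4).
Proof.
have -> : (k + j).+1.*2 + 4 = (j.*2 + k.*2).+1 + 5 by lia.
rewrite fib5.
have E1 : fib (j.*2 + k.*2).+1 = fib j.*2.+1 * fib k.*2.+1 + fib j.*2 * fib k.*2 by rewrite fib_add.
have E2 : fib (j.*2 + k.*2).+2 = fib j.*2.+2 * fib k.*2.+1 + fib j.*2.+1 * fib k.*2
  by rewrite -addSn fib_add.
rewrite E2.
have H0 : fib j.*2.+2 = fib j.*2 + fib j.*2.+1 by [].
move: E1 H0. rewrite /X /Y.
set u_ := fib j.*2; set u0 := fib j.*2.+1; set u1 := fib j.*2.+2.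
set v0 := fib k.*2; set v1 := fib k.*2.+1.
have h1 : u_ <= u0 := fib_le1 _.
have h2 : 3 * v0 <= 2 * v1 := fib_32 _.
have h3 : u_ * v0 <= u0 * v0 by apply: leq_mul.
have h4 : u0 * (3 * v0) <= u0 * (2 * v1) by apply: leq_mul.
move=> E1 H0. rewrite E1 H0. nia.
Qed.

Lemma caseB k j : fib j.*2.+1 * (X k + Y k + Y k) + fib j.*2 * Y k <= Y (k + j.+1).
Proof.
rewrite /Y.
have -> : (k + j.+1).*2 = (j.*2 + k.*2).+2 by lia.
rewrite (fibSS (j.*2 + k.*2).+1).
have E1 : fib (j.*2 + k.*2).+1 = fib j.*2.+1 * fib k.*2.+1 + fib j.*2 * fib k.*2 by rewrite fib_add.
have E2 : fib (j.*2 + k.*2).+2 = fib j.*2.+2 * fib k.*2.+1 + fib j.*2.+1 * fib k.*2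
  by rewrite -addSn fib_add.
rewrite E1 E2 /X.
have H0 : fib j.*2.+2 = fib j.*2 + fib j.*2.+1 by [].
rewrite H0.
set u0 := fib j.*2; set u1 := fib j.*2.+1.
set v0 := fib k.*2; set v1 := fib k.*2.+1.
nia.
Qed.

Lemma G w p q :
  (foldl step (p, q) w).1 <= fib (size w).+1 * maxn p q + fib (size w) * minn p q /\
  (foldl step (p, q) w).2 <= fib (size w).+1 * maxn p q + fib (size w) * minn p q.
Proof.
elim: w p q => [|b w IH] p q.
  rewrite /=; lia.
rewrite [foldl _ _ _]/=.
case E: (step (p, q) b) => [p' q'].
have [h1 h2] := IH p' q'.
suff H : fib (size w).+1 * maxn p' q' + fib (size w) * minn p' q' <=
         fib (size (b :: w)).+1 * maxn p q + fib (size (b :: w)) * minn p q.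
  split; [exact: leq_trans h1 H | exact: leq_trans h2 H].
change (size (b :: w)) with (size w).+1; rewrite fibSS.
case: b E => E; rewrite /step /= in E; case: E => <- <-.
- have -> : maxn (p + q) q = p + q by apply/maxn_idPl; rewrite leq_addl.
  have -> : minn (p + q) q = q by apply/minn_idPr; rewrite leq_addl.
  set f0 := fib (size w); set f1 := fib (size w).+1.
  case: (leqP p q) => h.
  + have : f0 * p <= f0 * q by apply: leq_mul.
    nia.
  + nia.
- have -> : maxn p (p + q) = p + q by apply/maxn_idPr; rewrite leq_addr.
  have -> : minn p (p + q) = p by apply/minn_idPl; rewrite leq_addr.
  set f0 := fib (size w); set f1 := fib (size w).+1.
  case: (leqP p q) => h.
  + have : f0 * p <= f0 * q by apply: leq_mul.
    nia.
  + nia.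
Qed.

Definition gb := fun (acc : nat) (b : bool) => acc.*2 + nat_of_bool b.

Lemma foldl_gb acc w : foldl gb acc w = acc * 2 ^ size w + foldl gb 0 w.
Proof.
elim: w acc => [|b w IH] acc /=; first by rewrite muln1 addn0.
rewrite IH [in RHS]IH /gb expnS; lia.
Qed.

Lemma binval_cons b w : binval (b :: w) = b * 2 ^ size w + binval w.
Proof. rewrite /binval -/gb /= foldl_gb /gb; lia. Qed.

Lemma binval_cat p w : binval (p ++ w) = binval p * 2 ^ size w + binval w.
Proof. by rewrite /binval -/gb foldl_cat foldl_gb. Qed.

Lemma binval_lt w : binval w < 2 ^ size w.
Proof.
elim: w => [|b w IH] //. rewrite binval_cons /= expnS. case: b => /=; lia.
Qed.

Definition alt j := flatten (nseq j [:: true; false]).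

Lemma alt_size j : size (alt j) = j.*2.
Proof. elim: j => [|j IH] //. by rewrite /alt /= -/(alt j) IH doubleS. Qed.

Lemma altS j : alt j.+1 = true :: false :: alt j. Proof. by []. Qed.

Lemma alt_XY k j : foldl step (X k, Y k) (alt j) = (X (k + j), Y (k + j)).
Proof.
elim: j k => [|j IH] k; first by rewrite addn0.
rewrite altS /= -YS -XS IH; by rewrite addSnnS.
Qed.


Lemma alt_fib_gen j a : foldl step (fib a.*2, fib a.*2.+1) (alt j) = (fib (a + j).*2, fib (a + j).*2.+1).
Proof.
elim: j a => [|j IH] a; first by rewrite addn0.
rewrite altS /=.
have -> : fib a.*2 + fib a.*2.+1 = fib (a.+1).*2 by rewrite doubleS fibSS.
have -> : fib (a.+1).*2 + fib a.*2.+1 = fib (a.+1).*2.+1 by rewrite doubleS (fibSS a.*2.+1) addnC.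
by rewrite IH addSnnS.
Qed.

Lemma core j k w : size w = j.*2 ->
  (foldl step (X k, Y k) w).2 <= Y (k + j) /\
  (binval w < binval (alt j) -> (foldl step (X k, Y k) w).2 <= fib ((k + j).*2 + 4)).
Proof.
elim: j k w => [|j IH] k w Hs.
  move/size0nil: Hs => ->. by rewrite addn0.
case: w Hs => [|b1 [|b2 w]] //= Hs.
have Hw : size w = j.*2 by rewrite doubleS in Hs; case: Hs.
case: b1 => /=; [case: b2 => /= |].
-
  have [_ h] := G w (X k + Y k + Y k) (Y k).
  rewrite Hw (maxn_idPl (leq_addl _ _)) (minn_idPr (leq_addl _ _)) in h.
  have hB := caseB k j.
  split; first exact: leq_trans h hB.
  rewrite altS !binval_cons /= alt_size Hw expnS.
  have := binval_lt (alt j); rewrite alt_size => hl.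
  lia.
-
  rewrite -YS -XS.
  have [h1 h2] := IH k.+1 w Hw.
  rewrite addSnnS in h1 h2.
  split => //.
  rewrite altS !binval_cons /= alt_size Hw => hl.
  apply: h2; lia.
-
  have [_ h] := G (b2 :: w) (X k) (X k + Y k).
  change (size (b2 :: w)) with (size w).+1 in h.
  rewrite Hw (maxn_idPr (leq_addr _ _)) (minn_idPl (leq_addr _ _)) in h.
  have hA := caseA k j. rewrite -addnS in hA.
  have hA' : (foldl step (X k, X k + Y k) (b2 :: w)).2 <= fib ((k + j.+1).*2 + 4).
    exact: leq_trans h hA.
  split => //.
  apply: ltnW; apply: leq_ltn_trans hA' (FY _).
Qed.

Fixpoint nbits L t : seq bool :=
  if L is L'.+1 then rcons (nbits L' t./2) (odd t) else [::].

Lemma nbits_size L t : size (nbits L t) = L.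
Proof. by elim: L t => [|L IH] t //=; rewrite size_rcons IH. Qed.

Lemma nbits_val L t : t < 2 ^ L -> binval (nbits L t) = t.
Proof.
elim: L t => [|L IH] t /=; first by rewrite expn0; case: t.
move=> Ht. rewrite binval_rcons IH; last by rewrite expnS in Ht; lia.
by rewrite -[in RHS](odd_double_half t) addnC.
Qed.

Lemma binrep_true w : binrep (binval (true :: w)) = true :: w.
Proof.
elim/last_ind: w => [|w b IH] //.
rewrite -rcons_cons binval_rcons binrepS; last by rewrite binval_cons; lia.
rewrite addnC half_bit_double IH oddD odd_double /=. by case: b.
Qed.

Lemma sv u : stern_s (binval u) = (foldl step (0, 1) u).2.
Proof. by rewrite PV. Qed.

Lemma sv' i : stern_s i = (foldl step (0, 1) (binrep i)).2.
Proof. by rewrite -sv binvalK. Qed.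

Lemma s_bound i L : i < 2 ^ L -> stern_s i <= fib L.+1.
Proof.
move=> Hi. rewrite sv'.
have [_ h] := G (binrep i) 0 1.
apply: (leq_trans h).
rewrite (_ : maxn 0 1 = 1) // (_ : minn 0 1 = 0) // muln1 muln0 addn0.
apply: fib_mono.
have [H1 H2] := binrep_size i.
case: (posnP i) => Hz; first by rewrite Hz.
have := H2 Hz.
have : 2 ^ size (binrep i) < 2 ^ L.+1 by rewrite expnS; lia.
rewrite ltn_exp2l //; lia.
Qed.

Lemma prefix1000 w : foldl step (0, 1) ([:: true; false; false; false] ++ w) = foldl step (X 0, Y 0) w.
Proof. by []. Qed.

Unset Implicit Arguments.

Theorem mainTheorem15 (n : nat) :
  (forall v, record_setter v -> size (binrep v) = 2 * n + 4 ->
     prefix [:: true; false; false; false] (binrep v) ->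
     v = binval (w1000 n)) /\
  record_setter (binval (w1000 n)) /\
  size (binrep (binval (w1000 n))) = 2 * n + 4 /\
  prefix [:: true; false; false; false] (binrep (binval (w1000 n))) /\
  (forall v, record_setter v -> size (binrep v) = 2 * n + 4 ->
     binval (w1000 n) <= v).
Proof.
set N := 2 ^ n.*2.
have e2n : 2 * n = n.*2 by lia.
rewrite e2n.
have E16 : 2 ^ (n.*2 + 4) = 16 * N by rewrite expnD mulnC.
have E8 : 2 ^ (n.*2 + 3) = 8 * N by rewrite expnD mulnC.
have Ew : w1000 n = [:: true; false; false; false] ++ alt n by reflexivity.
have Ew' : w1000 n = true :: ([:: false; false; false] ++ alt n) by reflexivity.
set a := binval (alt n).
have Ha : a < N by have := binval_lt (alt n); rewrite alt_size.
set V := binval (w1000 n).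
have EV : V = 8 * N + a by rewrite /V Ew binval_cat alt_size.
have sV : stern_s V = Y n.
  by rewrite /V sv Ew prefix1000 alt_XY.
have KEY : forall t, t < N -> stern_s (8 * N + t) <= Y n /\
    (t < a -> stern_s (8 * N + t) <= fib (n.*2 + 4)).
  move=> t Ht.
  have Ev : 8 * N + t = binval ([:: true; false; false; false] ++ nbits n.*2 t).
    by rewrite binval_cat nbits_size nbits_val.
  rewrite Ev sv prefix1000.
  have [h1 h2] := @core n 0 (nbits n.*2 t) (nbits_size _ _).
  rewrite add0n in h1 h2. split => // Hlt. apply: h2. by rewrite nbits_val.
set i0 := binval (alt n.+1 ++ [:: false]).
have Hi0 : i0 < 8 * N.
  have := binval_lt (alt n.+1 ++ [:: false]).
  by rewrite size_cat alt_size /= -E8 (_ : (n.+1).*2 + 1 = n.*2 + 3) //; lia.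
have si0 : stern_s i0 = fib (n.*2 + 4).
  rewrite /i0 sv foldl_cat.
  have H := alt_fib_gen n.+1 0. rewrite add0n in H.
  change (0, 1) with (fib 0.*2, fib 0.*2.+1). rewrite H.
  transitivity (fib (n.+1).*2 + fib (n.+1).*2.+1); first by [].
  rewrite -fibSS; congr fib; lia.
have SB : forall i, i < 8 * N -> stern_s i <= fib (n.*2 + 4).
  move=> i Hi. rewrite (_ : n.*2 + 4 = (n.*2 + 3).+1); last lia.
  apply: s_bound. by rewrite E8.
have FYn := FY n.
have range : forall v, size (binrep v) = n.*2 + 4 -> 8 * N <= v < 16 * N.
  move=> v Hs. have [H1 H2] := binrep_size v. rewrite Hs E16 in H1 H2.
  case: (posnP v) => Hz.
    by move: Hs; rewrite Hz binrep0 /=; lia.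
  have := H2 Hz. lia.
split; [|split; [|split; [|split]]].
- move=> v Hr Hs /prefixP [r Er].
  have Hsr : size r = n.*2 by move: Hs; rewrite Er size_cat /=; lia.
  have Ev : v = 8 * N + binval r.
    by rewrite -(binvalK v) Er binval_cat Hsr.
  have Hr' : binval r < N by have := binval_lt r; rewrite Hsr.
  have [h1 h2] := KEY _ Hr'.
  rewrite EV. case: (ltngtP (binval r) a) => Hc.
  + have := Hr i0 ltac:(lia). rewrite -Ev in h2. have := h2 Hc. lia.
  + have := Hr V ltac:(lia). rewrite -Ev in h1. lia.
  + by rewrite Ev Hc.
- move=> i Hi. rewrite sV.
  case: (ltnP i (8 * N)) => Hi8.
  + have := SB _ Hi8. lia.
  + have [_ h2] := KEY (i - 8 * N) ltac:(lia).
    rewrite (_ : 8 * N + (i - 8 * N) = i) in h2; last lia.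
    have := h2 ltac:(lia). lia.
- rewrite /V Ew' binrep_true.
  change (size (true :: ([:: false; false; false] ++ alt n))) with (4 + size (alt n)).
  rewrite alt_size; lia.
- by rewrite /V Ew' binrep_true -Ew' Ew prefix_prefix.
- move=> v Hr Hs. have := range v Hs. rewrite -/V EV => Hv.
  case: (leqP (8 * N + a) v) => // Hlt.
  have [_ h2] := KEY (v - 8 * N) ltac:(lia).
  rewrite (_ : 8 * N + (v - 8 * N) = v) in h2; last lia.
  have := h2 ltac:(lia).
  have := Hr i0 ltac:(lia). lia.
Qed.
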